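(* Let $g=\sum_{\alpha\in[0,1)}m(\alpha)[\alpha]$ be an effective divisor on $[0,1)$ of degree $r\geq1$. Then the minimal number $T(g)$, over all arrangements $a_1,\ldots,a_r$ of $g$, of indices $t\in\{1,\ldots,r\}$ with $a_t\geq a_{t+1}$ (indices modulo $r$, $a_{r+1}=a_1$) equals the maximal multiplicity: $T(g)=\max_\alpha m(\alpha)$.
   Context: An arrangement of $g$ is a sequence $a_1,\ldots,a_r\in[0,1)$ in which each $\alpha$ appears exactly $m(\alpha)$ times. *)

(* Defs.v *)
From HB Require Import structures.
From mathcomp Require Import all_boot all_order all_algebra.
From mathcomp Require Import reals.
Set Implicit Arguments. Unset Strict Implicit. Unset Printing Implicit Defensive.
Import Order.TTheory GRing.Theory Num.Theory.
Local Open Scope ring_scope.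

(* An effective divisor g on [0,1) of degree r is represented by a finite
   sequence of points of [0,1) (a multiset, taken up to permutation);
   the multiplicity m(alpha) is the number of occurrences of alpha. *)
Definition effective_divisor01 {R : realType} (g : seq R) : Prop :=
  all (fun a => (0 <= a) && (a < 1)) g.

Definition mult {R : realType} (g : seq R) (alpha : R) : nat := count_mem alpha g.

Definition max_mult {R : realType} (g : seq R) : nat :=
  (\max_(a <- g) mult g a)%N.

Definition arrangement {R : realType} (g s : seq R) : Prop :=
  forall alpha : R, count_mem alpha s = mult g alpha.

Definition cyc_descents {R : realType} (s : seq R) : nat :=
  \big[addn/0%N]_(t < size s)
     nat_of_bool (nth (0:R) s (t.+1 %% size s)%N <= nth (0:R) s t).

(* Main.v *)
Require Import Defs.
From HB Require Import structures.
From mathcomp Require Import all_boot all_order all_algebra.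
From mathcomp Require Import reals.
From mathcomp Require Import zify.
Set Implicit Arguments. Unset Strict Implicit. Unset Printing Implicit Defensive.
Import Order.TTheory GRing.Theory Num.Theory.
Local Open Scope ring_scope.

Fixpoint ld {R : realType} (x : R) (t : seq R) : nat :=
  match t with [::] => 0%N | y :: t' => (nat_of_bool (y <= x)%R + ld y t')%N end.

Lemma ld_sum {R : realType} (x : R) t :
  ld x t = \big[addn/0%N]_(i < size t) nat_of_bool (nth 0 t i <= nth 0 (x :: t) i)%R.
Proof.
elim: t x => [|y t IH] x /=; first by rewrite big_ord0.
by rewrite big_ord_recl /= IH.
Qed.

Lemma cyc_cons {R : realType} (x : R) t :
  cyc_descents (x :: t) = (ld x t + nat_of_bool (x <= last x t)%R)%N.
Proof.
rewrite /cyc_descents /= big_ord_recr /= modnn /= ld_sum.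
have -> : nth 0 (x :: t) (size t) = last x t.
  by rewrite (nth_last 0 (x :: t)).
congr (_ + _)%N; apply: eq_bigr => i _ /=.
by rewrite modn_small ?ltnS.
Qed.

Lemma ld_lower {R : realType} (a x : R) t :
  (count_mem a t + nat_of_bool (a <= x)%R <= ld x t + nat_of_bool (a <= last x t)%R)%N.
Proof.
elim: t x => [|y t IH] x /=; first by rewrite add0n.
move: (IH y) => /= H.
have key : (nat_of_bool (y == a) + nat_of_bool (a <= x)%R <=
            nat_of_bool (y <= x)%R + nat_of_bool (a <= y)%R)%N.
  case: (eqVneq y a) => [->|ya] /=; first by rewrite lexx addnC.
  case ax: (a <= x) => //; case ay: (a <= y); rewrite ?addn1 //.
  have : y < x by apply: (lt_le_trans _ ax); rewrite ltNge ay.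
  by move/ltW => ->.
move: key H; rewrite /=. set c2 := @count _ _ t.
move: (nat_of_bool (y==a)) (nat_of_bool (a<=x)%R) (nat_of_bool (y<=x)%R) (nat_of_bool (a<=y)%R) c2 (ld y t) (nat_of_bool (a <= last y t)%R) => *; lia.
Qed.

Lemma cyc_lower {R : realType} (a : R) s :
  (0 < size s)%N -> (count_mem a s <= cyc_descents s)%N.
Proof.
case: s => [//|x t] _; rewrite cyc_cons /=.
have H := ld_lower a x t.
move: H; case: (eqVneq x a) => [->|xa] /=.
  by rewrite lexx /= add1n addn1.
rewrite add0n; set c := @count _ _ t.
case ax: (a <= x); case ay: (a <= last x t); rewrite /=; try lia.
have -> : x <= last x t by apply: ltW; apply: (lt_le_trans _ ay); rewrite ltNge ax.
rewrite /=; lia.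
Qed.

Lemma ld_cat {R : realType} (x : R) b t : ld x (b ++ t) = (ld x b + ld (last x b) t)%N.
Proof. by elim: b x => [|y b IH] x //=; rewrite IH addnA. Qed.

Lemma ld_sorted {R : realType} (y : R) b : path <%O y b -> ld y b = 0%N.
Proof.
elim: b y => [|z b IH] y //= /andP[yz pb].
by rewrite IH // leNgt yz.
Qed.

Lemma ld_flatten {R : realType} (x : R) bs :
  all (sorted <%O) bs -> (ld x (flatten bs) <= size bs)%N.
Proof.
elim: bs x => [|b bs IH] x //= /andP[sb abs].
rewrite ld_cat; have := IH (last x b) abs.
case: b sb => [|y b] /= sb; first lia.
rewrite (ld_sorted sb); case: (y <= x) => /=; lia.
Qed.

Lemma count_iota_lt c m : (c <= m)%N -> count (fun k => k < c)%N (iota 0 m) = c.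
Proof.
move=> cm; rewrite -(subnKC cm) iotaD count_cat add0n.
rewrite (eq_in_count (a2 := predT)); last by move=> k; rewrite mem_iota.
rewrite count_predT size_iota (eq_in_count (a2 := pred0)).
  by rewrite count_pred0 addn0.
by move=> k; rewrite mem_iota /= => /andP[ck _]; rewrite ltnNge ck.
Qed.

Lemma cyc_ld {R : realType} (s : seq R) : (cyc_descents s <= ld (head (0%R:R) s) s)%N.
Proof.
case: s => [|x t]; first by rewrite /cyc_descents big_ord0.
rewrite cyc_cons /= lexx /= add1n addnC; case: (x <= last x t)%R => //=.
Qed.

Theorem lemma6p6 (R : realType) (g : seq R) :
  effective_divisor01 g -> (1 <= size g)%N ->
  (exists s : seq R, arrangement g s /\ cyc_descents s = max_mult g) /\
  (forall s : seq R, arrangement g s -> (max_mult g <= cyc_descents s)%N).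
Proof.
move=> _ g1.
have lower : forall s : seq R, arrangement g s -> (max_mult g <= cyc_descents s)%N.
  move=> s arr.
  have sz : size s = size g.
    apply: perm_size; apply/allP => z _; apply/eqP; exact: arr.
  apply/bigmax_leqP_seq => a _ _.
  rewrite -(arr a); apply: cyc_lower; by rewrite sz.
split=> //.
set m := max_mult g.
set u := sort <=%O (undup g).
pose round k := [seq x <- u | (k < mult g x)%N].
pose s := flatten [seq round k | k <- iota 0 m].
have arr : arrangement g s.
  move=> a; rewrite /s count_flatten -map_comp.
  have cu : forall k, count_mem a (round k) = ((a \in g) && (k < mult g a))%N.
    move=> k; rewrite /round count_filter.
    rewrite (eq_count (a2 := fun z => (z == a) && (k < mult g a)%N)); last first.
      by move=> z /=; case: eqVneq => [->|].
    case: (k < mult g a)%N; last first.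
      by rewrite andbF (eq_count (a2 := pred0)) ?count_pred0 // => z; rewrite andbF.
    rewrite andbT (eq_count (a2 := pred1 a)); last by move=> z; rewrite andbT.
    by rewrite count_uniq_mem ?sort_uniq ?undup_uniq // mem_sort mem_undup.
  rewrite (eq_map (g := fun k => nat_of_bool ((a \in g) && (k < mult g a))%N)); last first.
    by move=> k /=; rewrite cu.
  rewrite sumn_count; case ag: (a \in g) => /=.
    apply: count_iota_lt; rewrite /m /max_mult.
    exact: (leq_bigmax_seq (F := mult g) _ ag).
  rewrite (eq_count (a2 := pred0)) // count_pred0 /mult.
  by apply/esym/count_memPn; rewrite ag.
have ub : (cyc_descents s <= m)%N.
  have hs : all (sorted <%O) [seq round k | k <- iota 0 m].
    apply/allP => b /mapP[k _ ->]; apply: sorted_filter; first exact: lt_trans.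
    by rewrite sort_lt_sorted undup_uniq.
  have := ld_flatten (head (0%R:R) s) hs; rewrite size_map size_iota -/s.
  exact/leq_trans/cyc_ld.
exists s; split => //; apply/eqP; rewrite eqn_leq ub /=; exact: lower.
Qed.
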